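(* Let $M$ be a strongly primary monoid in $\mathcal{C}$ and let $V=\mathbb{R}\otimes_\mathbb{Z}\mathrm{gp}(M)$. The following are equivalent: (a) $\mathcal{M}(M)<\infty$; (b) $\dim\mathsf{cone}_V(M)=1$; (c) $M$ is isomorphic to a numerical monoid.
   Context: Convention: all monoids are commutative, cancellative, and reduced, written additively; $M^\bullet=M\setminus\{0\}$; atoms $\mathcal{A}(M)=M^\bullet\setminus(M^\bullet+M^\bullet)$. $\mathcal{C}$ is the class of monoids isomorphic to a submonoid of a free commutative monoid of finite rank (equivalently, of $(\mathbb{N}^d,+)$). $M$ is regarded as a submonoid of $V$; $\mathsf{cone}_V(M)$ is the set of finite nonnegative linear combinations of elements of $M$. A monoid is primary if it is nontrivial and for all $x,y\in M^\bullet$ there is $n\in\mathbb{N}$ with $ny\in x+M$; it is a BFM if every element is a sum of atoms and each element has finitely many factorization lengths; it is finitary if it is a BFM and there exist a finite $S\subseteq M$ and a positive integer $n$ with $nM^\bullet\subseteq S+M$ (where $nM^\bullet=\{x_1+\dots+x_n:x_i\in M^\bullet\}$); strongly primary means primary and finitary. For $x\in M^\bullet$, $\mathcal{M}(x)$ is the smallest $n\in\mathbb{N}$ with $nM^\bullet\subseteq x+M$ ($\infty$ if none), and $\mathcal{M}(M)=\sup\{\mathcal{M}(a): a\in\mathcal{A}(M)\}\in\mathbb{N}\cup\{\infty\}$. A numerical monoid is a submonoid of $(\mathbb{N},+)$ with finite complement in $\mathbb{N}$. *)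

(* Defs.v *)
From HB Require Import structures.
From mathcomp Require Import all_boot all_order all_algebra.
Set Implicit Arguments. Unset Strict Implicit. Unset Printing Implicit Defensive.
Import Order.TTheory GRing.Theory Num.Theory.

(* Elements of the free commutative monoid N^d, as finite functions 'I_d -> nat. *)
Definition vec (d : nat) := {ffun 'I_d -> nat}.
Definition vzero (d : nat) : vec d := [ffun => 0%N].
Definition vadd (d : nat) (x y : vec d) : vec d := [ffun i => (x i + y i)%N].
Definition vsum (d : nat) (l : seq (vec d)) : vec d := foldr (@vadd d) (vzero d) l.

Definition is_submonoid (d : nat) (M : vec d -> Prop) : Prop :=
  M (vzero d) /\ (forall x y, M x -> M y -> M (vadd x y)).

Definition nonzero_in (d : nat) (M : vec d -> Prop) (x : vec d) : Prop :=
  M x /\ x <> vzero d.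

Definition is_atom (d : nat) (M : vec d -> Prop) (a : vec d) : Prop :=
  nonzero_in M a /\ ~ (exists x y, nonzero_in M x /\ nonzero_in M y /\ a = vadd x y).

Definition is_primary (d : nat) (M : vec d -> Prop) : Prop :=
  (exists x, nonzero_in M x) /\
  (forall x y, nonzero_in M x -> nonzero_in M y ->
     exists n : nat, exists z, M z /\ vsum (nseq n y) = vadd x z).

Definition is_factorization (d : nat) (M : vec d -> Prop) (x : vec d) (l : seq (vec d)) :=
  (forall a, a \in l -> is_atom M a) /\ vsum l = x.

(* BFM: every element is a sum of atoms, and each element has finitely many
   factorization lengths (a set of naturals is finite iff it is bounded). *)
Definition is_BFM (d : nat) (M : vec d -> Prop) : Prop :=
  forall x, M x ->
    (exists l, is_factorization M x l) /\
    (exists N : nat, forall l, is_factorization M x l -> (size l <= N)%N).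

(* n M^bullet \subseteq T + M *)
Definition nMbullet_sub (d : nat) (M : vec d -> Prop) (n : nat) (T : vec d -> Prop) : Prop :=
  forall l : seq (vec d), size l = n -> (forall x, x \in l -> nonzero_in M x) ->
    exists s z, T s /\ M z /\ vsum l = vadd s z.

Definition is_finitary (d : nat) (M : vec d -> Prop) : Prop :=
  is_BFM M /\
  exists (S : seq (vec d)) (n : nat),
    (forall s, s \in S -> M s) /\ (0 < n)%N /\ nMbullet_sub M n (fun s => s \in S).

Definition strongly_primary (d : nat) (M : vec d -> Prop) : Prop :=
  is_primary M /\ is_finitary M.

(* "M(x) <= N": some n <= N satisfies n M^bullet \subseteq x + M. *)
Definition calM_le (d : nat) (M : vec d -> Prop) (x : vec d) (N : nat) : Prop :=
  exists n : nat, (n <= N)%N /\ nMbullet_sub M n (fun s => s = x).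

(* calM(M) = sup over atoms a of calM(a) is finite. *)
Definition calM_finite (d : nat) (M : vec d -> Prop) : Prop :=
  exists N : nat, forall a, is_atom M a -> calM_le M a N.

Definition embed (R : realFieldType) (d : nat) (x : vec d) : 'rV[R]_d :=
  \row_i (((x i)%:R)%R).

Definition in_cone (R : realFieldType) (d : nat) (M : vec d -> Prop) (v : 'rV[R]_d) : Prop :=
  exists s : seq (R * vec d),
    (forall p, p \in s -> (0 <= p.1)%R /\ M p.2) /\
    v = (\sum_(p <- s) p.1 *: embed R p.2)%R.

Definition cone_dim (R : realFieldType) (d : nat) (M : vec d -> Prop) (n : nat) : Prop :=
  exists X : seq 'rV[R]_d,
    (forall v, v \in X -> in_cone M v) /\
    (forall v, in_cone M v -> v \in <<X>>%VS) /\
    \dim <<X>>%VS = n.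

Definition is_numerical (N : nat -> Prop) : Prop :=
  N 0%N /\ (forall x y, N x -> N y -> N (x + y)%N) /\
  exists b : nat, forall n, (b <= n)%N -> N n.

Definition iso_to_numerical (d : nat) (M : vec d -> Prop) : Prop :=
  exists (N : nat -> Prop) (f : vec d -> nat),
    is_numerical N /\
    (forall x, M x -> N (f x)) /\
    f (vzero d) = 0%N /\
    (forall x y, M x -> M y -> f (vadd x y) = (f x + f y)%N) /\
    (forall x y, M x -> M y -> f x = f y -> x = y) /\
    (forall n, N n -> exists x, M x /\ f x = n).

(* Main.v *)
Require Import Defs.
From HB Require Import structures.
From mathcomp Require Import all_boot all_order all_algebra.
From mathcomp Require Import zify.
From Stdlib Require Import Classical.
Set Implicit Arguments. Unset Strict Implicit. Unset Printing Implicit Defensive.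

Lemma vaddE d (x y : vec d) i : vadd x y i = x i + y i.
Proof. by rewrite ffunE. Qed.
Lemma vzeroE d i : vzero d i = 0.
Proof. by rewrite ffunE. Qed.
Lemma vsumE d (l : seq (vec d)) i : vsum l i = \sum_(x <- l) x i.
Proof.
elim: l => [|x l IH] /=; first by rewrite big_nil vzeroE.
by rewrite big_cons vaddE IH.
Qed.
Lemma vsum_nseq d n (y : vec d) i : vsum (nseq n y) i = n * y i.
Proof.
elim: n => [|n IH] /=; first by rewrite vzeroE.
by rewrite vaddE IH mulSn.
Qed.
Lemma vsum_in d (M : vec d -> Prop) (l : seq (vec d)) :
  is_submonoid M -> (forall x, x \in l -> M x) -> M (vsum l).
Proof.
move=> [H0 HD]; elim: l => [|x l IH] Hl //=.
apply: HD; first by apply: Hl; rewrite inE eqxx.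
by apply: IH => y Hy; apply: Hl; rewrite inE Hy orbT.
Qed.
Lemma nonzero_coord d (x : vec d) : x <> vzero d -> exists i, 0 < x i.
Proof.
move=> Hx; case: (pickP (fun i => 0 < x i)) => [i Hi|H]; first by exists i.
exfalso; apply: Hx; apply/ffunP => i; rewrite vzeroE.
by have := H i; case: (x i).
Qed.
Lemma vec_eq0 d (x : vec d) : (forall i, x i = 0) -> x = vzero d.
Proof. by move=> H; apply/ffunP => i; rewrite vzeroE H. Qed.

Definition propP d (M : vec d -> Prop) :=
  forall x y, M x -> M y -> forall i j, x i * y j = x j * y i.

Lemma sum_ratio d (l : seq (vec d)) (y : vec d) i j :
  (forall c, c \in l -> c i * y j = c j * y i) ->
  vsum l i * y j = vsum l j * y i.
Proof.
elim: l => [|c l IH] H /=; first by rewrite !vzeroE.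
rewrite !vaddE !mulnDl H ?inE ?eqxx // IH // => c' Hc'.
by apply: H; rewrite inE Hc' orbT.
Qed.

Lemma sum_lt d (l : seq (vec d)) (b : vec d) i j :
  vsum l i * b j < vsum l j * b i -> exists2 c, c \in l & c i * b j < c j * b i.
Proof.
elim: l => [|c l IH] /=; first by rewrite !vzeroE.
rewrite !vaddE !mulnDl => H.
case: (ltnP (c i * b j) (c j * b i)) => Hc; first by exists c; rewrite ?inE ?eqxx.
have [c' Hc' Hlt] : exists2 c', c' \in l & c' i * b j < c' j * b i.
  by apply: IH; lia.
by exists c' => //; rewrite inE Hc' orbT.
Qed.

Lemma calM_P d (M : vec d -> Prop) :
  is_submonoid M -> strongly_primary M -> calM_finite M -> propP M.
Proof.
move=> Hsub [[[y0 [My0 y0nz]] _] [HBFM _]] [N HN].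
pose B := N * \sum_(k < d) y0 k.
have Hbd : forall a, is_atom M a -> forall k, a k <= B.
  move=> a Ha k; have [n [Hn Hsub']] := HN a Ha.
  have [s [z [-> [Mz Heq]]]] : exists s z, s = a /\ M z /\ vsum (nseq n y0) = vadd s z.
    apply: Hsub'; first by rewrite size_nseq.
    by move=> x; rewrite mem_nseq => /andP [_ /eqP ->].
  have := congr1 (fun v : vec d => v k) Heq; rewrite vsum_nseq vaddE => Hk.
  have Hy : y0 k <= \sum_(k < d) y0 k by rewrite (bigD1 k) //= leq_addr.
  rewrite /B; have : n * y0 k <= N * \sum_(k < d) y0 k by apply: leq_mul.
  lia.
have Hstep : forall a b, is_atom M a -> is_atom M b -> forall i j,
    b i * a j < b j * a i -> exists c, is_atom M c /\ c i * b j < c j * b i.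
  move=> a b Ha Hb i j Hlt; have [n [_ Hsub']] := HN a Ha.
  have [s [m [-> [Mm Heq]]]] : exists s z, s = a /\ M z /\ vsum (nseq n b) = vadd s z.
    apply: Hsub'; first by rewrite size_nseq.
    by move=> x; rewrite mem_nseq => /andP [_ /eqP ->]; case: Hb.
  have Hi := congr1 (fun v : vec d => v i) Heq; have Hj := congr1 (fun v : vec d => v j) Heq.
  rewrite /= vsum_nseq vaddE in Hi; rewrite /= vsum_nseq vaddE in Hj.
  have [[l [Hl Hlm]] _] := HBFM m Mm.
  have Hm : m i * b j < m j * b i.
    have E1 : (a i + m i) * b j = (a j + m j) * b i.
      by rewrite -Hi -Hj mulnAC.
    move: E1; rewrite !mulnDl; lia.
  rewrite -Hlm in Hm; have [c Hc Hclt] := sum_lt Hm.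
  by exists c; split => //; apply: Hl.
have Hatoms : forall a b, is_atom M a -> is_atom M b -> forall i j,
    a i * b j = a j * b i.
  move=> a b Ha Hb i j.
  pose mu (b : vec d) := #|[set p : 'I_B.+1 * 'I_B.+1 | p.1 * b j < p.2 * b i]|.
  have Hno : forall k b, is_atom M b -> mu b < k -> forall a, is_atom M a ->
      ~ (b i * a j < b j * a i).
    elim=> [//|k IH] b' Hb' Hk a' Ha' Hlt.
    have [c [Hc Hcb]] := Hstep a' b' Ha' Hb' i j Hlt.
    apply: (IH c Hc _ b' Hb' Hcb).
    have : mu c < mu b'; last by lia.
    apply: proper_card; apply/properP; split.
      apply/subsetP => p; rewrite !inE => Hp.
      have Hcj : 0 < c j by case: (c j) Hcb; rewrite ?muln0 ?mul0n.
      move: Hp Hcb; set p1 := (nat_of_ord p.1); set p2 := (nat_of_ord p.2) => Hp Hcb.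
      have H1 : p1 * c j * b' j <= p2 * c i * b' j by rewrite leq_mul2r ltnW ?orbT.
      have Hp2 : 0 < p2 by case: p2 Hp H1 => //; rewrite mul0n.
      have H2 : p2 * (c i * b' j) < p2 * (c j * b' i) by rewrite ltn_pmul2l.
      have : p1 * b' j * c j < p2 * b' i * c j by move: H1 H2; rewrite !mulnA; lia.
      by rewrite ltn_pmul2r.
    have Hci : c i < B.+1 by rewrite ltnS Hbd.
    have Hcj' : c j < B.+1 by rewrite ltnS Hbd.
    exists (Ordinal Hci, Ordinal Hcj'); rewrite !inE /= //.
    by rewrite mulnC ltnn.
  have H1 := Hno (mu b).+1 b Hb (ltnSn _) a Ha.
  have H2 := Hno (mu a).+1 a Ha (ltnSn _) b Hb.
  move/negP: H1; rewrite -leqNgt => H1; move/negP: H2; rewrite -leqNgt => H2.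
  lia.
move=> x y Mx My i j.
have [[lx [Hlx Hx]] _] := HBFM x Mx.
have [[ly [Hly Hy]] _] := HBFM y My.
have Hxb : forall b, b \in ly -> b i * x j = b j * x i.
  move=> b Hb; rewrite -Hx.
  have : vsum lx i * b j = vsum lx j * b i.
    by apply: sum_ratio => c Hc; apply: Hatoms; [apply: Hlx | apply: Hly].
  lia.
have := sum_ratio Hxb; rewrite Hy; lia.
Qed.

Lemma smul_closed (G : nat -> Prop) : G 0 -> (forall x y, G x -> G y -> G (x + y)) ->
  forall k x, G x -> G (k * x).
Proof. move=> G0 GD; elim=> [|k IH] x Gx; first by rewrite mul0n. by rewrite mulSn; apply: GD => //; apply: IH. Qed.

Lemma descent (G : nat -> Prop) : G 0 -> (forall x y, G x -> G y -> G (x + y)) ->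
  forall h, 0 < h -> (exists p q, G p /\ G q /\ p = q + h) ->
  exists g, 0 < g /\ (exists p q, G p /\ G q /\ p = q + g) /\ forall e, G e -> g %| e.
Proof.
move=> G0 GD; have GM := smul_closed G0 GD.
move=> h; elim: h {-2}h (leqnn h) => [|n IH] h Hhn Hh Hpq; first by lia.
case: (classic (forall e, G e -> h %| e)) => Hall; first by exists h.
have [e He] := not_all_ex_not _ _ Hall.
have [Ge Hne] : G e /\ ~ h %| e by apply: imply_to_and.
have [a _ Ha] := Bezoutl e Hh.
set k := (gcdn h e + a * e) %/ h.
have Hk : k * h = gcdn h e + a * e by rewrite divnK.
have Hg0 : 0 < gcdn h e by rewrite gcdn_gt0 Hh.
have Hgle : gcdn h e <= h by apply: dvdn_leq => //; apply: dvdn_gcdl.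
have Hgne : gcdn h e != h.
  apply/eqP => Heq; apply: Hne; rewrite -Heq; apply: dvdn_gcdr.
apply: (IH (gcdn h e)) => //; first by lia.
have [p [q [Gp [Gq Hpq']]]] := Hpq.
exists (k * p), (k * q + a * e); split; first by apply: GM.
split; first by apply: GD; apply: GM.
rewrite Hpq' mulnDr Hk; lia.
Qed.

Lemma P_iso d (M : vec d -> Prop) x0 k0 :
  is_submonoid M -> M x0 -> 0 < x0 k0 -> propP M -> iso_to_numerical M.
Proof.
move=> [M0 MD] Mx0 Hk0 HP.
pose G n := exists x, M x /\ x k0 = n.
have G0 : G 0 by exists (vzero d); rewrite vzeroE.
have GD : forall x y, G x -> G y -> G (x + y).
  move=> _ _ [x [Mx <-]] [y [My <-]]; exists (vadd x y); split; first by apply: MD.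
  by rewrite vaddE.
have [g [Hg [[p [q [Gp [Gq Hpq]]]] Hdiv]]] : exists g, 0 < g /\ (exists p q, G p /\ G q /\ p = q + g) /\ forall e, G e -> g %| e.
  apply: (descent G0 GD Hk0); exists (x0 k0), 0; split; last by split.
  by exists x0.
pose f (x : vec d) := x k0 %/ g.
pose N n := exists x, M x /\ f x = n.
have fD : forall x y, M x -> M y -> f (vadd x y) = f x + f y.
  move=> x y Mx My; rewrite /f vaddE divnDl //; apply: Hdiv; by exists x.
have N0 : N 0 by exists (vzero d); rewrite /f vzeroE div0n.
have ND : forall x y, N x -> N y -> N (x + y).
  move=> _ _ [x [Mx <-]] [y [My <-]]; exists (vadd x y); split; first by apply: MD.
  by rewrite fD.
have NM := smul_closed N0 ND.
have [Np Nq Hpq'] : [/\ N (p %/ g), N (q %/ g) & p %/ g = q %/ g + 1].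
  have [xp [Mxp Hxp]] := Gp; have [xq [Mxq Hxq]] := Gq.
  split; [by exists xp; rewrite /f Hxp | by exists xq; rewrite /f Hxq |].
  by rewrite Hpq divnDl ?divnn ?Hg // ; apply: Hdiv.
set P' := p %/ g in Np Hpq'; set Q' := q %/ g in Nq Hpq'.
exists N, f; split.
  split; first by []. split; first by [].
  exists (Q' * Q') => n Hn.
  case: (posnP Q') => HQ.
    by rewrite HQ add0n in Hpq'; rewrite -(muln1 n) -Hpq'; apply: NM.
  have Hdm := divn_eq n Q'.
  have Hr : n %% Q' < Q' by rewrite ltn_mod.
  have Ht : Q' <= n %/ Q' by rewrite leq_divRL.
  have -> : n = (n %/ Q' - n %% Q') * Q' + (n %% Q') * P' by rewrite Hpq'; nia.
  by apply: ND; apply: NM.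
split; first by move=> x Mx; exists x.
split; first by rewrite /f vzeroE div0n.
split; first by [].
split; last by [].
move=> x y Mx My Hf.
have Hxk : x k0 = y k0.
  rewrite -(divnK (Hdiv _ (ex_intro _ x (conj Mx erefl)))).
  by rewrite -(divnK (Hdiv _ (ex_intro _ y (conj My erefl)))) -/(f x) -/(f y) Hf.
apply/ffunP => k.
have H1 := HP _ _ Mx Mx0 k k0; have H2 := HP _ _ My Mx0 k k0.
apply/eqP; rewrite -(eqn_pmul2r Hk0) H1 H2 Hxk //.
Qed.

Lemma iso_calM d (M : vec d -> Prop) :
  is_submonoid M -> iso_to_numerical M -> calM_finite M.
Proof.
move=> [M0 MD] [N [f [[N0 [ND [b Hb]]] [HMN [f0 [fD [finj fsurj]]]]]]].
have fz : forall x, M x -> f x = 0 -> x = vzero d.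
  by move=> x Mx Hx; apply: finj => //; rewrite Hx f0.
have fpos : forall x, nonzero_in M x -> 0 < f x.
  move=> x [Mx Hx]; rewrite lt0n; apply/eqP => H; exact: Hx (fz x Mx H).
have [e [Me Hfe]] := fsurj b.+1 (Hb _ (leqnSn b)).
have Hatom : forall a, is_atom M a -> f a <= 2 * b.+1.
  move=> a [[Ma Ha0] Hna]; case: (leqP (f a) (2 * b.+1)) => // Hlt; exfalso.
  have Hbb : b <= f a - b.+1 by lia.
  have [w [Mw Hfw]] := fsurj (f a - b.+1) (Hb _ Hbb).
  apply: Hna; exists e, w; split.
    split => // He; move: Hfe; rewrite He f0 //.
  split; first by split => // Hw; move: Hfw; rewrite Hw f0; lia.
  apply: finj => //; first by apply: MD.
  by rewrite fD // Hfe Hfw; lia.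
have fsum : forall l, (forall x, x \in l -> M x) -> M (vsum l) /\ f (vsum l) = \sum_(x <- l) f x.
  elim=> [|x l IH] Hl /=; first by rewrite big_nil f0.
  have Mx : M x by apply: Hl; rewrite inE eqxx.
  have [Ml Hfl] := IH (fun y Hy => Hl y ltac:(by rewrite inE Hy orbT)).
  by rewrite big_cons; split; [apply: MD | rewrite fD // Hfl].
exists (3 * b.+1) => a Ha; exists (3 * b.+1); split => //.
move=> l Hsz Hl.
have [Ml Hfl] := fsum l (fun x Hx => (Hl x Hx).1).
have Hge : size l <= \sum_(x <- l) f x.
  rewrite -sum1_size big_seq [X in _ <= X]big_seq; apply: leq_sum => x Hx.
  exact: fpos (Hl x Hx).
have Hfa := Hatom a Ha.
have Hbb : b <= f (vsum l) - f a.
  rewrite Hfl; apply: (leq_trans _ (leq_sub2r _ Hge)); rewrite Hsz; lia.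
have [z [Mz Hfz]] := fsurj (f (vsum l) - f a) (Hb _ Hbb).
exists a, z; split => //; split => //.
apply: finj => //; first by apply: MD => //; case: Ha => -[].
have Hle : f a <= f (vsum l) by rewrite Hfl; apply: leq_trans Hge; rewrite Hsz; lia.
by rewrite fD //; [rewrite Hfz subnKC | case: Ha => -[]].
Qed.
Section ConeSec.
Import GRing.Theory Num.Theory.
Local Open Scope ring_scope.

Lemma embed_cone (R : realFieldType) d (M : vec d -> Prop) x : M x -> @in_cone R d M (embed R x).
Proof.
move=> Mx; exists [:: (1, x)]; split.
  by move=> p; rewrite inE => /eqP -> /=; split.
by rewrite big_cons big_nil addr0 scale1r.
Qed.

Lemma P_cone (R : realFieldType) d (M : vec d -> Prop) x0 k0 :
  M x0 -> (0 < x0 k0)%N -> propP M -> @cone_dim R d M 1.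
Proof.
move=> Mx0 Hk0 HP; exists [:: embed R x0]; split.
  by move=> v; rewrite inE => /eqP ->; apply: embed_cone.
have Hnz : embed R x0 != 0.
  apply/eqP => /matrixP /(_ 0 k0); rewrite !mxE => /eqP; rewrite pnatr_eq0 => /eqP H.
  by rewrite H in Hk0.
split; last by rewrite span_seq1 dim_vline Hnz.
move=> v [s [Hs ->]]; rewrite span_seq1 big_seq; apply: memv_suml => p Hp.
have [_ Mp] := Hs p Hp.
apply: memvZ.
have -> : embed R p.2 = ((p.2 k0)%:R / (x0 k0)%:R) *: embed R x0.
  apply/matrixP => i j; rewrite !mxE.
  have Hx : (x0 k0)%:R != 0 :> R by rewrite pnatr_eq0 -lt0n.
  apply: (mulIf Hx); rewrite mulrAC divfK // -!natrM.
  by rewrite (HP _ _ Mp Mx0 j k0) mulnC.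
by apply: memvZ; apply: memv_line.
Qed.

Lemma cone_P (R : realFieldType) d (M : vec d -> Prop) :
  @cone_dim R d M 1 -> propP M.
Proof.
move=> [X [_ [HX Hdim]]]; set U := <<X>>%VS in HX Hdim.
have HU0 : U != 0%VS by rewrite -dimv_eq0 Hdim.
set w := vpick U.
have HUw : U = <[w]>%VS.
  apply/eqP; rewrite eq_sym eqEdim -memvE memv_pick Hdim /= dim_vline.
  by rewrite vpick0 HU0.
move=> x y Mx My i j.
have /vlineP [a Ha] : embed R x \in <[w]>%VS by rewrite -HUw; apply/HX/embed_cone.
have /vlineP [b Hb] : embed R y \in <[w]>%VS by rewrite -HUw; apply/HX/embed_cone.
have E : forall (z : vec d) c k, embed R z = c *: w -> (z k)%:R = c * w 0 k.
  by move=> z c k /matrixP /(_ 0 k); rewrite !mxE.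
apply/eqP; rewrite -(eqr_nat R) !natrM (E _ _ _ Ha) (E _ _ _ Hb) (E _ _ _ Ha) (E _ _ _ Hb).
by rewrite mulrACA [X in _ == X]mulrACA [w 0 j * _]mulrC.
Qed.
End ConeSec.

Theorem mainTheorem19 (R : realFieldType) (d : nat) (M : vec d -> Prop) :
  is_submonoid M -> strongly_primary M ->
  (calM_finite M <-> cone_dim R M 1) /\ (calM_finite M <-> iso_to_numerical M).
Proof.
move=> Hsub Hsp.
have [[x0 [Mx0 Hx0]] _] := Hsp.1.
have [k0 Hk0] := nonzero_coord Hx0.
have AP := calM_P Hsub Hsp.
split; split.
- by move=> HA; apply: (P_cone R Mx0 Hk0 (AP HA)).
- by move=> HB; apply: (iso_calM Hsub (P_iso Hsub Mx0 Hk0 (cone_P HB))).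
- by move=> HA; apply: (P_iso Hsub Mx0 Hk0 (AP HA)).
- by move=> HC; apply: (iso_calM Hsub HC).
Qed.
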